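(* Let $I\subset S$ be a nonzero proper graded ideal. Then there exists a constant $c$ such that $\mathrm{v}(I^k)\ge\alpha(I)k+c$ for all $k\gg0$.
   Context: $S=K[x_1,\dots,x_n]$ is a standard graded polynomial ring over a field $K$, $S_d$ its degree-$d$ component. For a graded ideal $J\subset S$, $\mathrm{v}(J)=\min\{d:\exists f\in S_d\text{ with }(J:f)\in\operatorname{Ass}(J)\}$. $\alpha(I)$ is the least degree of a nonzero homogeneous element of $I$. *)

(* Defs.v *)
From Stdlib Require Import ClassicalEpsilon.
From mathcomp Require Import all_boot all_algebra.
From mathcomp Require Import mpoly.
Set Implicit Arguments. Unset Strict Implicit. Unset Printing Implicit Defensive.
Import GRing.Theory.
Local Open Scope ring_scope.

Section IdealDefs.
Variables (K : fieldType) (n : nat).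
Local Notation S := {mpoly K[n]}.

Definition is_ideal (I : S -> Prop) : Prop :=
  [/\ I 0,
      (forall f g, I f -> I g -> I (f + g)) &
      (forall r g, I g -> I (r * g))].

Definition hcomp (d : nat) (p : S) : S :=
  \sum_(m <- msupp p | mdeg m == d) p@_m *: 'X_[m].

Definition is_graded_ideal (I : S -> Prop) : Prop :=
  is_ideal I /\ forall f d, I f -> I (hcomp d f).

Definition kprod (I : S -> Prop) (k : nat) (g : S) : Prop :=
  exists t : seq S, [/\ size t = k, (forall h, h \in t -> I h) & g = \prod_(h <- t) h].

Definition ideal_pow (I : S -> Prop) (k : nat) : S -> Prop :=
  fun f => exists s : seq (S * S),
    (forall p, p \in s -> kprod I k p.2) /\ f = \sum_(p <- s) p.1 * p.2.

Definition colon (J : S -> Prop) (f : S) : S -> Prop := fun g => J (g * f).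

Definition is_prime_ideal (P : S -> Prop) : Prop :=
  [/\ is_ideal P, ~ P 1 & forall a b, P (a * b) -> P a \/ P b].

Definition Ass (J : S -> Prop) (P : S -> Prop) : Prop :=
  is_prime_ideal P /\ exists h : S, forall g, P g <-> colon J h g.

(* The least natural number satisfying P (0 if none exists). *)
Definition least (P : nat -> Prop) : nat :=
  match excluded_middle_informative
          (exists d, P d /\ forall e, P e -> (d <= e)%N) with
  | left h => proj1_sig (constructive_indefinite_description _ h)
  | right _ => 0%N
  end.

Definition vnumber (J : S -> Prop) : nat :=
  least (fun d => exists f : S, f \is d.-homog /\ Ass J (colon J f)).

Definition alpha (I : S -> Prop) : nat :=
  least (fun d => exists f : S, [/\ I f, f != 0 & f \is d.-homog]).

End IdealDefs.

(* Main.v *)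
Require Import Defs.
From Stdlib Require Import ClassicalEpsilon Classical.
From mathcomp Require Import all_boot all_algebra.
From mathcomp Require Import mpoly.
From mathcomp Require Import zify.
Set Implicit Arguments. Unset Strict Implicit. Unset Printing Implicit Defensive.
Import GRing.Theory Num.Theory.
Local Open Scope ring_scope.

Section Hcomp.
Variables (K : fieldType) (n : nat).
Local Notation S := {mpoly K[n]}.
Implicit Types (p q r g f : S).

Lemma hcompE d p m : (hcomp d p)@_m = if mdeg m == d then p@_m else 0.
Proof.
rewrite /hcomp raddf_sum /=.
under eq_bigr do rewrite mcoeffZ mcoeffX.
case: (boolP (m \in msupp p)) => mp.
  rewrite big_mkcond /= (bigD1_seq m) ?msupp_uniq //= eqxx mulr1.
  rewrite big1 ?addr0; last by move=> m0 /negbTE; rewrite eq_sym => ->; case: ifP; rewrite ?mulr0.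
  by case: (mdeg m == d).
rewrite big1_seq; last first.
  by move=> m' /andP[_ m'p]; case: (eqVneq m' m) => [e|_]; [rewrite -e m'p in mp | rewrite mulr0].
by move: mp; rewrite mcoeff_msupp negbK => /eqP ->; case: ifP.
Qed.

Lemma hcompD d p q : hcomp d (p + q) = hcomp d p + hcomp d q.
Proof. by apply/mpolyP => m; rewrite mcoeffD !hcompE mcoeffD; case: ifP; rewrite ?addr0. Qed.

Lemma hcomp0 d : hcomp d (0 : S) = 0.
Proof. by apply/mpolyP => m; rewrite hcompE mcoeff0; case: ifP. Qed.

Lemma hcompN d p : hcomp d (- p) = - hcomp d p.
Proof. by apply/mpolyP => m; rewrite mcoeffN !hcompE mcoeffN; case: ifP; rewrite ?oppr0. Qed.

Lemma hcomp_sum d (T : Type) (s : seq T) (F : T -> S) :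
  hcomp d (\sum_(x <- s) F x) = \sum_(x <- s) hcomp d (F x).
Proof.
elim: s => [|x s IH]; first by rewrite !big_nil hcomp0.
by rewrite !big_cons hcompD IH.
Qed.

Lemma hcomp_homog d p : hcomp d p \is d.-homog.
Proof.
apply/dhomogP => m; rewrite mcoeff_msupp hcompE.
by case: (mdeg m =P d) => // _; rewrite eqxx.
Qed.

Lemma hcomp_of_homog d e p : p \is e.-homog -> hcomp d p = if d == e then p else 0.
Proof.
move=> hp; apply/mpolyP => m; rewrite hcompE.
case: (eqVneq d e) => [->|ne].
  by case: eqP => // ne'; rewrite (dhomog_nemf_coeff hp) //; apply/eqP.
case: eqP => [E|]; last by rewrite mcoeff0.
by move: ne; rewrite -E => ne; rewrite mcoeff0 (dhomog_nemf_coeff hp).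
Qed.

Lemma hcomp_decomp p : p = \sum_(i < msize p) hcomp i p.
Proof.
apply/mpolyP => m; rewrite raddf_sum /=.
under eq_bigr do rewrite hcompE.
case: (ltnP (mdeg m) (msize p)) => h.
  rewrite (bigD1 (Ordinal h)) //= eqxx big1 ?addr0 //.
  by move=> i /eqP ne; case: eqP => // E; case: ne; apply/val_inj; rewrite /= E.
rewrite big1; last by move=> i _; case: eqP => // E; move: (ltn_ord i); rewrite -E ltnNge h.
by apply/memN_msupp_eq0/msize_mdeg_ge.
Qed.

Lemma hcompMh d e g f : f \is e.-homog ->
  hcomp d (g * f) = if (e <= d)%N then hcomp (d - e) g * f else 0.
Proof.
move=> hf; rewrite {1}(hcomp_decomp g) mulr_suml hcomp_sum.
under eq_bigr => i _ do rewrite (hcomp_of_homog _ (dhomogM (hcomp_homog i g) hf)).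
case: leqP => hed.
  case: (ltnP (d - e) (msize g)) => hs.
    rewrite (bigD1 (Ordinal hs)) //= subnK // eqxx big1 ?addr0 //.
    move=> i /eqP ne; case: eqP => // E; case: ne; apply/val_inj; rewrite /= E.
    by rewrite addnK.
  rewrite big1; last first.
    move=> i _; case: eqP => // E; by move: hs (ltn_ord i); rewrite E addnK => hs; rewrite ltnNge hs.
  suff -> : hcomp (d - e) g = 0 by rewrite mul0r.
  apply/mpolyP => m; rewrite hcompE mcoeff0; case: eqP => // E.
  by apply/memN_msupp_eq0/msize_mdeg_ge; rewrite E.
by rewrite big1 // => i _; case: eqP => // E; move: hed; rewrite E ltnNge leq_addl.
Qed.

End Hcomp.


Lemma least_ex (P : nat -> Prop) d : P d -> exists d0, P d0 /\ forall e, P e -> (d0 <= e)%N.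
Proof.
elim/ltn_ind: d => d IH Pd.
case: (classic (exists e, (e < d)%N /\ P e)) => [[e [lt Pe]]|nex]; first exact: IH Pe.
exists d; split => // e Pe; rewrite leqNgt; apply/negP => lt; apply: nex; by exists e.
Qed.

Lemma leastP (P : nat -> Prop) d : P d -> P (least P) /\ forall e, P e -> (least P <= e)%N.
Proof.
move=> /least_ex ex; rewrite /least.
case: excluded_middle_informative => [h|]; last by [].
by case: (constructive_indefinite_description _ h).
Qed.


Section Ideals.
Variables (K : fieldType) (n : nat).
Local Notation S := {mpoly K[n]}.
Implicit Types (p q r g f h : S) (J : S -> Prop).

Lemma idN J g : is_ideal J -> J g -> J (- g).
Proof. by case=> _ _ hM /(hM (-1)); rewrite mulN1r. Qed.

Lemma idD J f g : is_ideal J -> J f -> J g -> J (f + g).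
Proof. by case=> _ hD _; apply: hD. Qed.

Lemma idB J f g : is_ideal J -> J f -> J g -> J (f - g).
Proof. by move=> hJ Jf Jg; apply: idD => //; apply: idN. Qed.

Lemma idM J r g : is_ideal J -> J g -> J (r * g).
Proof. by case=> _ _ hM; apply: hM. Qed.

Lemma idMr J r g : is_ideal J -> J g -> J (g * r).
Proof. by move=> hJ Jg; rewrite mulrC; apply: idM. Qed.

Lemma id0 J : is_ideal J -> J 0.
Proof. by case. Qed.

Lemma idZ J c g : is_ideal J -> J g -> J (c *: g).
Proof. by move=> hJ Jg; rewrite -mul_mpolyC; apply: idM. Qed.

Lemma id_sum J (T : eqType) (s : seq T) (F : T -> S) :
  is_ideal J -> (forall x, x \in s -> J (F x)) -> J (\sum_(x <- s) F x).
Proof.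
move=> hJ; elim: s => [|x s IH] H; first by rewrite big_nil; apply: id0.
rewrite big_cons; apply: idD => //; first by apply: H; rewrite inE eqxx.
by apply: IH => y ys; apply: H; rewrite inE ys orbT.
Qed.

Definition LD (k : nat) (h : S) := forall m, m \in msupp h -> (k <= mdeg m)%N.

Lemma LD0 k : LD k 0.
Proof. by move=> m; rewrite msupp0. Qed.

Lemma LDD k p q : LD k p -> LD k q -> LD k (p + q).
Proof. by move=> hp hq m /msuppD_le; rewrite mem_cat => /orP[/hp|/hq]. Qed.

Lemma LDM a b p q : LD a p -> LD b q -> LD (a + b) (p * q).
Proof.
move=> hp hq m /msuppM_le /allpairsP [[m1 m2] [/= /hp h1 /hq h2 ->]].
by rewrite mdegD leq_add.
Qed.

Lemma LDw p : LD 0 p.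
Proof. by []. Qed.

Lemma LD_sum k (T : eqType) (s : seq T) (F : T -> S) :
  (forall x, x \in s -> LD k (F x)) -> LD k (\sum_(x <- s) F x).
Proof.
elim: s => [|x s IH] H; first by rewrite big_nil; apply: LD0.
rewrite big_cons; apply: LDD; first by apply: H; rewrite inE eqxx.
by apply: IH => y ys; apply: H; rewrite inE ys orbT.
Qed.

Variable I : S -> Prop.

Lemma kprod_LD a k g : (forall h, I h -> LD a h) -> kprod I k g -> LD (k * a) g.
Proof.
move=> HI [t [<- Ht ->]]; elim: t Ht => [|x t IH] Ht.
  by rewrite big_nil => m; rewrite msupp1 inE => /eqP ->; rewrite mdeg0.
rewrite big_cons /= mulSn; apply: LDM.
  by apply: HI; apply: Ht; rewrite inE eqxx.
by apply: IH => h ht; apply: Ht; rewrite inE ht orbT.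
Qed.

Lemma IP_LD a k g : (forall h, I h -> LD a h) -> ideal_pow I k g -> LD (k * a) g.
Proof.
move=> HI [s [Hs ->]]; apply: LD_sum => x xs.
by have := LDM (@LDw x.1) (kprod_LD HI (Hs _ xs)); rewrite add0n.
Qed.

End Ideals.


Section IPow.
Variables (K : fieldType) (n : nat).
Local Notation S := {mpoly K[n]}.
Implicit Types (p q r g f h : S) (J : S -> Prop).
Variable I : S -> Prop.

Lemma IP_ideal k : is_ideal (ideal_pow I k).
Proof.
split.
- by exists [::]; rewrite big_nil.
- move=> f g [s1 [H1 ->]] [s2 [H2 ->]]; exists (s1 ++ s2); rewrite big_cat; split => //.
  by move=> p; rewrite mem_cat => /orP[/H1|/H2].
- move=> r g [s [Hs ->]]; exists [seq (r * z.1, z.2) | z : S * S <- s]; split.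
    by move=> z /mapP [x xs ->] /=; apply: Hs.
  by rewrite big_map mulr_sumr; apply: eq_bigr => z _; rewrite mulrA.
Qed.

Lemma kprod_IP k g : kprod I k g -> ideal_pow I k g.
Proof. by move=> H; exists [:: (1, g)]; rewrite big_seq1 mul1r; split => // p; rewrite inE => /eqP ->. Qed.

Lemma kprod_cons k h g : I h -> kprod I k g -> kprod I k.+1 (h * g).
Proof.
move=> Ih [t [St Ht ->]]; exists (h :: t); rewrite big_cons /= St; split => //.
by move=> x; rewrite inE => /orP[/eqP ->|/Ht].
Qed.

Lemma kprod0 : kprod I 0 1.
Proof. by exists [::]; rewrite big_nil. Qed.

Lemma pow_IP k g : I g -> ideal_pow I k (g ^+ k).
Proof.
move=> Ig; apply: kprod_IP; elim: k => [|k IH]; first by rewrite expr0; apply: kprod0.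
by rewrite exprS; apply: kprod_cons.
Qed.

Lemma IP_sub k g : is_ideal I -> (0 < k)%N -> ideal_pow I k g -> I g.
Proof.
move=> hI k0 [s [Hs ->]]; apply: id_sum => // x /Hs [t [St Ht ->]].
apply: idM => //; move: k0; rewrite -St; case: t Ht St => [|y t] // Ht _ _.
rewrite big_cons; apply: idMr => //; apply: Ht; by rewrite inE eqxx.
Qed.

Hypothesis gI : is_graded_ideal I.

Lemma kprod_hcomp k g j : kprod I k g -> ideal_pow I k (hcomp j g).
Proof.
case=> t [<- Ht ->]; elim: t Ht j => [|x t IH] Ht j.
  rewrite big_nil (hcomp_of_homog _ (dhomog1 _ _)).
  by case: eqP => _; [apply: kprod_IP; apply: kprod0 | apply: id0; apply: IP_ideal].
rewrite big_cons /=.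
have -> : x * \prod_(h <- t) h = \sum_(i < msize x) (hcomp i x * \prod_(h <- t) h).
  by rewrite -mulr_suml -hcomp_decomp.
rewrite hcomp_sum; apply: id_sum; first exact: IP_ideal.
move=> i _; rewrite mulrC (hcompMh _ _ (hcomp_homog i x)).
case: ifP => _; last by apply: id0; apply: IP_ideal.
have /IH : forall h, h \in t -> I h by move=> h ht; apply: Ht; rewrite inE ht orbT.
move=> /(_ (j - i)%N) [s [Hs ->]].
rewrite mulr_suml; apply: id_sum; first exact: IP_ideal.
move=> y ys; rewrite -mulrA [y.2 * _]mulrC; apply: idM; first exact: IP_ideal.
apply: kprod_IP; apply: kprod_cons; last exact: Hs.
by case: gI => _; apply; apply: Ht; rewrite inE eqxx.
Qed.

Lemma IP_graded k : is_graded_ideal (ideal_pow I k).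
Proof.
split; first exact: IP_ideal.
move=> f d [s [Hs ->]]; rewrite hcomp_sum; apply: id_sum; first exact: IP_ideal.
move=> y ys; have -> : y.1 * y.2 = \sum_(i < msize y.1) (hcomp i y.1 * y.2).
  by rewrite -mulr_suml -hcomp_decomp.
rewrite hcomp_sum; apply: id_sum; first exact: IP_ideal.
move=> i _; rewrite mulrC (hcompMh _ _ (hcomp_homog i y.1)).
case: ifP => _; last by apply: id0; apply: IP_ideal.
by apply: idMr; [exact: IP_ideal | apply: kprod_hcomp; apply: Hs].
Qed.

End IPow.


Section HPrime.
Variables (K : fieldType) (n : nat).
Local Notation S := {mpoly K[n]}.
Implicit Types (p q r g f h a b : S) (J P : S -> Prop).

Lemma msize_leP p k : (forall m, m \in msupp p -> (mdeg m < k)%N) -> (msize p <= k)%N.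
Proof. by move=> H; rewrite msizeE; apply/bigmax_leqP_seq => m mp _; apply: H. Qed.

Lemma hcomp_ge d p : (msize p <= d)%N -> hcomp d p = 0.
Proof.
move=> h; apply/mpolyP => m; rewrite hcompE mcoeff0; case: eqP => // E.
by apply/memN_msupp_eq0/msize_mdeg_ge; rewrite E.
Qed.

Lemma msize_top p : (msize (p - hcomp (msize p).-1 p) <= (msize p).-1)%N.
Proof.
apply: msize_leP => m; rewrite mcoeff_msupp mcoeffB hcompE.
case: (mdeg m =P (msize p).-1) => [E|ne]; first by rewrite subrr eqxx.
rewrite subr0 -mcoeff_msupp => /msize_mdeg_lt; rewrite -ltnS.
case: (msize p) ne => [|s] //= ne; rewrite ltnS leq_eqVlt => /orP[/eqP [] /ne //|//].
Qed.

Lemma topM a b : hcomp ((msize a).-1 + (msize b).-1) (a * b) =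
   hcomp (msize a).-1 a * hcomp (msize b).-1 b.
Proof.
set da := (msize a).-1; set db := (msize b).-1.
rewrite {1}(hcomp_decomp b) mulr_sumr hcomp_sum.
under eq_bigr => j _ do rewrite (hcompMh _ _ (hcomp_homog j b)).
case: (posnP (msize b)) => [b0|bpos].
  rewrite b0 big_ord0 /db b0 /= (hcomp_ge (p := b)) ?b0 // mulr0 //.
have hdb : (db < msize b)%N by rewrite /db prednK.
rewrite (bigD1 (Ordinal hdb)) //= leq_addl addnK big1 ?addr0 //.
move=> j /eqP ne; case: ifP => // hj.
rewrite hcomp_ge ?mul0r //.
have ltj : (j < db)%N.
  rewrite ltn_neqAle; have := ltn_ord j; rewrite -[X in (_ < X)%N -> _](prednK bpos) ltnS => ->.
  by rewrite andbT; apply/eqP => E; apply: ne; apply: val_inj.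
rewrite /da; move: ltj; case: (mmeasure mdeg a) => [|s] /=; lia.
Qed.

Lemma homog_prime P : is_graded_ideal P ->
  (forall a b da db, a \is da.-homog -> b \is db.-homog -> P (a * b) -> P a \/ P b) ->
  forall a b, P (a * b) -> P a \/ P b.
Proof.
move=> [iP gP] Hh.
suff H : forall N a b, (msize a + msize b <= N)%N -> P (a * b) -> P a \/ P b.
  by move=> a b; apply: H (leqnn _).
elim=> [|N IH] a b hN Pab.
  left; have : msize a == 0%N by move: hN; case: (msize a).
  by rewrite msize_poly_eq0 => /eqP ->; apply: id0.
case: (classic (P a)) => Pa; first by left.
case: (classic (P b)) => Pb; first by right.
have a0 : a != 0 by apply/eqP => E; apply: Pa; rewrite E; apply: id0.
have b0 : b != 0 by apply/eqP => E; apply: Pb; rewrite E; apply: id0.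
have sa : (0 < msize a)%N by rewrite lt0n msize_poly_eq0.
have sb : (0 < msize b)%N by rewrite lt0n msize_poly_eq0.
set ta := hcomp (msize a).-1 a; set tb := hcomp (msize b).-1 b.
case: (classic (P ta)) => Pta.
  have P1 : P ((a - ta) * b) by rewrite mulrBl; apply: idB => //; apply: idMr.
  have hs : (msize (a - ta) + msize b <= N)%N.
    by have := msize_top a; rewrite -/ta; move: hN sa; lia.
  case: (IH _ _ hs P1) => [H|//]; exfalso; apply: Pa.
  by rewrite -(subrK ta a); apply: idD.
case: (classic (P tb)) => Ptb.
  have P1 : P (a * (b - tb)) by rewrite mulrBr; apply: idB => //; apply: idM.
  have hs : (msize a + msize (b - tb) <= N)%N.
    by have := msize_top b; rewrite -/tb; move: hN sb; lia.
  case: (IH _ _ hs P1) => [//|H]; exfalso; apply: Pb.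
  by rewrite -(subrK tb b); apply: idD.
have := gP _ ((msize a).-1 + (msize b).-1)%N Pab; rewrite topM -/ta -/tb.
by case/(Hh _ _ _ _ (hcomp_homog _ _) (hcomp_homog _ _)).
Qed.

End HPrime.


Lemma nat_mono_sub (f : nat -> nat) : exists phi : nat -> nat,
  (forall i, (phi i < phi i.+1)%N) /\ (forall i, (f (phi i) <= f (phi i.+1))%N).
Proof.
have H : forall i, exists j, (i <= j)%N /\ forall j', (i <= j')%N -> (f j <= f j')%N.
  move=> i; have [v [[j [ij <-]] Hv]] := @least_ex (fun v => exists j, (i <= j)%N /\ f j = v) (f i)
     (ex_intro _ i (conj (leqnn i) erefl)).
  by exists j; split => // j' ij'; apply: Hv; exists j'.
pose c i := proj1_sig (constructive_indefinite_description _ (H i)).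
have cP : forall i, (i <= c i)%N /\ forall j', (i <= j')%N -> (f (c i) <= f j')%N.
  by move=> i; rewrite /c; case: (constructive_indefinite_description _ _).
pose phi := fix phi k := match k with 0 => c 0%N | k'.+1 => c (phi k').+1 end.
have phiS : forall k, phi k.+1 = c (phi k).+1 by [].
have phiC : forall k, exists i, (i <= phi k)%N /\ phi k = c i.
  by case=> [|k]; [exists 0%N | exists (phi k).+1; split => //; rewrite phiS; case: (cP (phi k).+1)].
exists phi; split => i.
  by rewrite phiS; case: (cP (phi i).+1).
have [i0 [hi0 ->]] := phiC i.
case: (cP i0) => _; apply; rewrite phiS; apply: leq_trans hi0 _.
by case: (cP (phi i).+1) => h _; apply: leq_trans h.
Qed.

Section Dickson.
Variable n : nat.

Lemma mono_sub_k (s : nat -> 'X_{1..n}) k : (k <= n)%N -> exists phi : nat -> nat,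
  (forall i, (phi i < phi i.+1)%N) /\
  forall c : 'I_n, (c < k)%N -> forall i, (s (phi i) c <= s (phi i.+1) c)%N.
Proof.
elim: k => [|k IH] hk.
  by exists id; split => // c.
have [phi [phI phM]] := IH (ltnW hk).
have [psi [psI psM]] := nat_mono_sub (fun i => s (phi i) (Ordinal hk)).
exists (fun i => phi (psi i)); split.
  move=> i; apply: (homo_ltn (r := fun a b => (a < b)%N)) => //; exact: ltn_trans.
move=> c; rewrite ltnS leq_eqVlt => /orP[/eqP E|lt] i.
  by have -> : c = Ordinal hk by apply: val_inj.
apply: (homo_leq (f := fun j => s (phi j) c) (r := fun a b => (a <= b)%N)) => //.
- by move=> y x z; apply: leq_trans.
- by move=> j; apply: phM.
- exact: ltnW.
Qed.

Lemma dickson (s : nat -> 'X_{1..n}) : exists i j, (i < j)%N /\ (s i <= s j)%MM.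
Proof.
have [phi [phI phM]] := mono_sub_k s (leqnn n).
exists (phi 0%N), (phi 1%N); split => //; apply/mnm_lepP => c; exact: phM.
Qed.

End Dickson.


From mathcomp Require Import all_order.
Import Order.TTheory GRing.Theory Num.Theory.

Section ACC.
Variables (K : fieldType) (n : nat).
Local Notation S := {mpoly K[n]}.
Implicit Types (p q r g f h a b : S) (J P : S -> Prop).

Definition inn J (m : 'X_{1..n}) := exists h, [/\ J h, h != 0 & mlead h = m].

Lemma mpolyX_neq0 (m : 'X_{1..n}) : 'X_[m] != 0 :> S.
Proof. by apply/eqP => /(congr1 (mcoeff m)); rewrite mcoeffX eqxx mcoeff0 => /eqP; rewrite oner_eq0. Qed.

Lemma inn_up J m m' : is_ideal J -> inn J m -> (m <= m')%MM -> inn J m'.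
Proof.
move=> iJ [h [Jh h0 <-]] le; exists ('X_[m' - mlead h] * h); split.
- by apply: idM.
- by rewrite mulf_neq0 // mpolyX_neq0.
- by rewrite mleadM ?mpolyX_neq0 // mleadXm submK.
Qed.

Lemma inn_eq J1 J2 : is_ideal J1 -> is_ideal J2 -> (forall g, J1 g -> J2 g) ->
  (forall m, inn J2 m -> inn J1 m) -> forall g, J2 g -> J1 g.
Proof.
move=> i1 i2 s12 hinn.
suff H : forall m g, J2 g -> g != 0 -> mlead g = m -> J1 g.
  move=> g J2g; case: (eqVneq g 0) => [->|g0]; first exact: id0.
  exact: H J2g g0 erefl.
elim/(@ltmwf n) => m IH g J2g g0 gm.
have [h [J1h h0 hm]] := hinn m (ex_intro _ g (And3 J2g g0 gm)).
set c := g@_m / h@_m.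
have hc : h@_m != 0 by rewrite -hm mleadc_eq0.
set g' := g - c *: h.
have J2g' : J2 g' by apply: idB => //; apply: idZ => //; apply: s12.
have -> : g = g' + c *: h by rewrite /g' subrK.
apply: idD => //; last exact: idZ.
case: (eqVneq g' 0) => [->|g'0]; first exact: id0.
apply: (IH (mlead g')) => //.
have c0 : g'@_m = 0 by rewrite /g' mcoeffB mcoeffZ /c divfK // subrr.
rewrite lt_neqAle; apply/andP; split.
  by apply/eqP => E; move: (mlead_supp g'0); rewrite E mcoeff_msupp c0 eqxx.
apply: le_trans (mleadB_le _ _) _; rewrite leUx -gm lexx /=.
by apply: le_trans (mleadZ_le _ _) _; rewrite hm gm.
Qed.

Lemma acc (C : nat -> S -> Prop) : (forall i, is_ideal (C i)) ->
  (forall i g, C i g -> C i.+1 g) -> exists i, forall g, C i.+1 g -> C i g.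
Proof.
move=> iC sC; apply: NNPP => nex.
have H : forall i, exists m, inn (C i.+1) m /\ ~ inn (C i) m.
  move=> i; apply: NNPP => nm; apply: nex; exists i.
  apply: inn_eq => // [g|m Hm]; first exact: sC.
  by apply: NNPP => nm'; apply: nm; exists m.
pose s i := proj1_sig (constructive_indefinite_description _ (H i)).
have sP : forall i, inn (C i.+1) (s i) /\ ~ inn (C i) (s i).
  by move=> i; rewrite /s; case: (constructive_indefinite_description _ _).
have mono : forall i j, (i <= j)%N -> forall g, C i g -> C j g.
  apply: (homo_leq (f := C) (r := fun X Y => forall g, X g -> Y g)) => //.
  by move=> Y X Z hXY hYZ g /hXY /hYZ.
have [i [j [ij le]]] := dickson s.
case: (sP j) => _; apply; apply: inn_up le => //.
case: (sP i) => [[h [Ch h0 hm]] _]; exists h; split => //.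
exact: mono ij _ Ch.
Qed.

End ACC.


Section Ass.
Variables (K : fieldType) (n : nat).
Local Notation S := {mpoly K[n]}.
Implicit Types (p q r g f h a b : S) (J P : S -> Prop).

Lemma colon_ideal J f : is_ideal J -> is_ideal (colon J f).
Proof.
move=> iJ; split; rewrite /colon.
- by rewrite mul0r; apply: id0.
- by move=> x y hx hy; rewrite mulrDl; apply: idD.
- by move=> r x hx; rewrite -mulrA; apply: idM.
Qed.

Lemma colon_graded J f e : is_graded_ideal J -> f \is e.-homog -> is_graded_ideal (colon J f).
Proof.
move=> [iJ gJ] hf; split; first exact: colon_ideal.
move=> g d; rewrite /colon => /(gJ _ (d + e)%N).
by rewrite (hcompMh _ _ hf) leq_addl addnK.
Qed.

Lemma exists_ass J : is_graded_ideal J -> ~ J 1 ->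
  exists d f, f \is d.-homog /\ is_prime_ideal (colon J f).
Proof.
move=> gJ nJ1; have iJ := gJ.1; apply: NNPP => nex.
pose Q f b := [/\ (exists e, b * f \is e.-homog), ~ J (b * f) &
                  exists a, J (a * (b * f)) /\ ~ J (a * f)].
have Step : forall f d, f \is d.-homog -> ~ J f -> exists b, Q f b.
  move=> f d hf nJf; apply: NNPP => nb; apply: nex; exists d, f; split => //.
  split; [exact: colon_ideal | by rewrite /colon mul1r |].
  apply: homog_prime; first exact: colon_graded hf.
  move=> a b da db ha hb; rewrite /colon => Jab.
  apply: NNPP => H; apply: nb; exists b; split.
  - by exists (db + d)%N; apply: dhomogM.
  - by move=> Jbf; apply: H; right.
  - by exists a; split; [rewrite mulrA | move=> Jaf; apply: H; left].
pose nx f := epsilon (inhabits (0 : S)) (Q f) * f.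
pose F i := iter i nx 1.
have inv : forall i, (exists d, F i \is d.-homog) /\ ~ J (F i).
  elim=> [|i [[d hd] nJ]]; first by split => //; exists 0%N; apply: dhomog1.
  have [] := epsilon_spec (inhabits (0 : S)) (Q (F i)) (Step _ _ hd nJ).
  by move=> he nJ' _; split.
have chain : forall i g, colon J (F i) g -> colon J (F i.+1) g.
  by move=> i g; rewrite /colon /= -/(nx (F i)) /nx mulrCA => Hg; apply: idM.
have [i Hi] := acc (C := fun i => colon J (F i)) (fun i => colon_ideal _ iJ) chain.
have [[d hd] nJ] := inv i.
have [_ _ [a [Ja nJa]]] := epsilon_spec (inhabits (0 : S)) (Q (F i)) (Step _ _ hd nJ).
by apply: nJa; apply: Hi.
Qed.

End Ass.


Unset Implicit Arguments. Set Strict Implicit. Set Printing Implicit Defensive.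

Theorem lemma4p4 (K : fieldType) (n : nat) (I : {mpoly K[n]} -> Prop) :
  is_graded_ideal I ->
  (exists f, I f /\ f != 0) ->
  ~ I 1 ->
  exists c : int, exists k0 : nat, forall k : nat, (k0 <= k)%N ->
    ((alpha I * k)%N%:Z + c <= (vnumber (ideal_pow I k))%:Z).
Proof.
move=> gI [f0 [If0 f00]] nI1; have iI := gI.1.
have hc : forall h m, I h -> m \in msupp h ->
    [/\ I (hcomp (mdeg m) h), hcomp (mdeg m) h != 0 & hcomp (mdeg m) h \is (mdeg m).-homog].
  move=> h m Ih mh; split; [exact: gI.2 | | exact: hcomp_homog].
  apply/eqP => /(congr1 (mcoeff m)); rewrite hcompE eqxx mcoeff0 => /eqP.
  by apply/negP; rewrite -mcoeff_msupp mh.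
have [[g [Ig g0 gh]] amin] := leastP (P := fun d => exists f : {mpoly K[n]}, [/\ I f, f != 0 & f \is d.-homog]) (ex_intro _ _ (hc _ _ If0 (mlead_supp f00))).
rewrite -/(alpha I) in Ig g0 gh amin.
have LDI : forall h, I h -> LD (alpha I) h.
  by move=> h Ih m mh; apply: amin; exists (hcomp (mdeg m) h); apply: hc.
exists (- (alpha I)%:Z), 1%N => k k1.
set J := ideal_pow I k.
have gJ : is_graded_ideal J := IP_graded gI k.
have nJ1 : ~ J 1 by move/(IP_sub iI k1).
have [d [f [hf Pf]]] := exists_ass gJ nJ1.
have [[fv [hv [Pv _]]] _] := leastP (P := fun d => exists f, f \is d.-homog /\ Ass J (colon J f))
   (ex_intro _ f (conj hf (conj Pf (ex_intro _ f (fun g => iff_refl _))))).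
rewrite -/(vnumber J) in hv.
case: Pv => iP nP1 mP.
have fv0 : fv != 0.
  by apply/eqP => E; apply: nP1; rewrite /colon E mulr0; apply: id0; exact: gJ.1.
have powP : forall j, colon J fv (g ^+ j.+1) -> colon J fv g.
  elim=> [|j IH]; first by rewrite expr1.
  by rewrite exprS => /mP [//|/IH].
have Pg : colon J fv g.
  apply: (powP k.-1); rewrite prednK //; rewrite /colon.
  by apply: idMr; [exact: gJ.1 | exact: pow_IP].
have gf0 : g * fv != 0 by rewrite mulf_neq0.
have hgf := dhomogM gh hv.
have := IP_LD LDI Pg (mlead_supp gf0).
rewrite (dhomogP _ _ _ hgf _ (mlead_supp gf0)).
lia.
Qed.
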